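(* Let $V_{ij}(s)$, $b_i(s)$, for $i=1,\dots,M$ and $j=1,\dots,N_2$, be real-analytic functions in a neighborhood $W$ of $s_0\in\mathbb{R}^{N_1}$. Denote by $\mathcal{G}$ the collection of real-analytic functions on $W\times\mathbb{R}^{N_2}$, affine in $t=(t^1,\dots,t^{N_2})$, given by $L_i(s,t):=\sum_jV_{ij}(s)t^j-b_i(s)$ for $i=1,\dots,M$. Assume that all functions in $\mathcal{G}$ vanish at $(s_0,t_0)$ for some $t_0\in\mathbb{R}^{N_2}$, and let $A:=\{(s,t)\in W\times\mathbb{R}^{N_2}: f(s,t)=0\ \forall f\in\mathcal{G}\}$. If there exists an integer $\kappa\ge0$ such that for all $s_1\in W$, $\dim\{t:(s_1,t)\in A\}=\kappa$, then $(s_0,t_0)$ is an ordinary zero of $\mathcal{G}$.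
   Context: A point $y_0\in\mathbb{R}^N$ is an ordinary zero of a family $\mathcal{G}$ of real-analytic functions near $y_0$ vanishing at $y_0$ if there exist $f_1,\dots,f_\kappa\in\mathcal{G}$ whose Jacobian matrix $(\partial f_i/\partial y^j(y_0))$ has rank $\kappa$ and such that the germ at $y_0$ of the common zero set $\{y: f(y)=0\ \forall f\in\mathcal{G}\}$ coincides with the germ at $y_0$ of $\{y:f_1(y)=\dots=f_\kappa(y)=0\}$. The dimension of the (affine) solution set $\{t:(s_1,t)\in A\}$ is its dimension as an affine subspace. *)

(* Defs.v *)
From HB Require Import structures.
From mathcomp Require Import all_boot all_order all_algebra.
From mathcomp Require Import all_classical all_reals all_analysis.
Set Implicit Arguments. Unset Strict Implicit. Unset Printing Implicit Defensive.
Import Order.TTheory GRing.Theory Num.Theory.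
Import numFieldNormedType.Exports.
Local Open Scope classical_set_scope.
Local Open Scope ring_scope.

(* Points of R^N are row vectors 'rV[R]_N (coordinate i of y is y 0 i). *)

(* Partial sums of a multivariate power series centred at a, over the
   boxes of multi-indices alpha with all alpha_i <= n. *)
Definition mpser_box (R : realType) (N : nat) (c : ('I_N -> nat) -> R)
    (a y : 'rV[R]_N) (n : nat) : R :=
  \sum_(alpha : {ffun 'I_N -> 'I_n.+1})
     c (fun i => nat_of_ord (alpha i)) * \prod_(i < N) (y 0 i - a 0 i) ^+ alpha i.

Definition mpser_box_abs (R : realType) (N : nat) (c : ('I_N -> nat) -> R)
    (a y : 'rV[R]_N) (n : nat) : R :=
  \sum_(alpha : {ffun 'I_N -> 'I_n.+1})
     `|c (fun i => nat_of_ord (alpha i))| * \prod_(i < N) `|y 0 i - a 0 i| ^+ alpha i.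

Definition real_analytic_at (R : realType) (N : nat) (f : 'rV[R]_N -> R)
    (a : 'rV[R]_N) : Prop :=
  exists r : R, 0 < r /\ exists c : ('I_N -> nat) -> R,
    forall y : 'rV[R]_N, `|y - a| < r ->
      cvg (mpser_box_abs c a y @ \oo) /\ (mpser_box c a y @ \oo --> f y).

Definition real_analytic_on (R : realType) (N : nat) (W : set 'rV[R]_N)
    (f : 'rV[R]_N -> R) : Prop :=
  forall a, W a -> real_analytic_at f a.

Definition jacobian (R : realType) (N k : nat) (f : 'I_k -> ('rV[R]_N -> R))
    (y0 : 'rV[R]_N) : 'M[R]_(k, N) :=
  \matrix_(p < k, j < N) ('D_(delta_mx 0 j) (f p) y0).

Definition ordinary_zero (R : realType) (N : nat) (G : set ('rV[R]_N -> R))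
    (y0 : 'rV[R]_N) : Prop :=
  exists (k : nat) (f : 'I_k -> ('rV[R]_N -> R)),
    (forall p, G (f p)) /\
    \rank (jacobian f y0) = k /\
    \forall y \near y0,
      ((forall g, G g -> g y = 0) <-> (forall p, f p y = 0)).

(* S is an affine subspace of R^n of dimension k (in particular nonempty). *)
Definition affine_dim (R : realType) (n : nat) (S : set 'rV[R]_n) (k : nat) : Prop :=
  exists (p : 'rV[R]_n) (U : 'M[R]_n),
    \rank U = k /\ S = [set p + u | u in [set u : 'rV[R]_n | (u <= U)%MS]].

(* The affine functions L_i(s,t) = sum_j V_ij(s) t^j - b_i(s), on
   R^(N1+N2) = R^N1 x R^N2 (y = row_mx s t). *)
Definition affL (R : realType) (N1 N2 M : nat)
    (V : 'I_M -> 'I_N2 -> ('rV[R]_N1 -> R)) (b : 'I_M -> ('rV[R]_N1 -> R))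
    (i : 'I_M) (y : 'rV[R]_(N1 + N2)) : R :=
  \sum_(j < N2) V i j (lsubmx y) * rsubmx y 0 j - b i (lsubmx y).

(* Main.v *)
Require Import Defs.
From HB Require Import structures.
From mathcomp Require Import all_boot all_order all_algebra.
From mathcomp Require Import all_classical all_reals all_analysis.
From mathcomp Require Import perm lra.
Import Order.TTheory GRing.Theory Num.Theory.
Import numFieldNormedType.Exports.
Local Open Scope classical_set_scope.
Local Open Scope ring_scope.
Lemma mx_entry_le (R : realType) m n (x : 'M[R]_(m, n)) i j : `|x i j| <= `|x|.
Proof.
have /mapP[k Hk ->] : `|x i j| \in [seq `|x ij.1 ij.2| | ij : 'I_m * 'I_n].
  by apply/mapP; exists (i, j) => //=; rewrite mem_enum.
by rewrite [leRHS]/Num.Def.normr /= mx_normrE; apply/bigmax_geP; right => /=; exists k.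
Qed.

Lemma mx_norm_le (R : realType) m n (x : 'M[R]_(m, n)) e :
  0 <= e -> (forall i j, `|x i j| <= e) -> `|x| <= e.
Proof.
move=> e0 H; rewrite [leLHS]/Num.Def.normr /= mx_normrE.
by apply: bigmax_le => // -[i j] _; exact: H.
Qed.

Lemma bnd {R : realType} {u : nat -> R} : cvgn u -> exists S, forall n, `|u n| <= S.
Proof.
move=> /cvg_seq_bounded [M [_ HM]].
exists (M + 1) => n; have := HM (M + 1); rewrite ltrDl => /(_ ltr01); apply; done.
Qed.
Lemma box_est (R : realType) N (c : ('I_N -> nat) -> R) (a y z : 'rV[R]_N) (d rho : R) n :
 0 < rho -> 0 <= d -> d <= rho -> (forall i, `|y 0 i - a 0 i| <= d) ->
 (forall i, `|z 0 i - a 0 i| = rho) ->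
 `|mpser_box c a y n - c (fun _ => 0%N)| <= d / rho * mpser_box_abs c a z n.
Proof.
move=> rho0 d0 drho Hy Hz.
rewrite /mpser_box /mpser_box_abs (bigD1 [ffun=> ord0]) //= [X in _ <= _ * X](bigD1 [ffun=> ord0]) //=.
have E : (fun i : 'I_N => nat_of_ord ([ffun=> ord0 : 'I_n.+1] i)) = fun _ => 0%N.
  by apply: boolp.funext => i /=; rewrite ffunE.
rewrite E big1 ?mulr1; last by move=> i _; rewrite ffunE expr0.
rewrite addrC addrK.
apply: le_trans (ler_norm_sum _ _ _) _.
rewrite mulrDr; apply: ler_wpDl.
  by apply: mulr_ge0; [exact: divr_ge0 (ltW rho0) | apply: mulr_ge0 => //; apply: prodr_ge0 => i _; exact: exprn_ge0].
rewrite mulr_sumr; apply: ler_sum => al Hal.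
rewrite normrM normr_prod mulrCA; apply: ler_wpM2l => //.
have [i Hi] : exists i, al i != ord0.
  apply/existsP; apply: contraR Hal; rewrite negb_exists => /forallP H.
  by apply/eqP/ffunP => j; rewrite ffunE; exact/eqP/negPn/H.
have Hm : (0 < nat_of_ord (al i))%N.
  by rewrite lt0n; apply: contra Hi => /eqP H; apply/eqP/val_inj.
rewrite (bigD1 i) //= [X in _ <= _ * X](bigD1 i) //= mulrA.
apply: ler_pM.
- by rewrite normrX exprn_ge0.
- by apply: prodr_ge0 => j _; rewrite normrX exprn_ge0.
- move: Hm; case: (nat_of_ord (al i)) => // k _.
  rewrite normrX !exprS Hz mulrA divfK ?gt_eqF //.
  apply: ler_pM => //.
  apply: lerXn2r; rewrite ?nnegrE ?(ltW rho0) //.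
  exact: le_trans (Hy i) drho.
- apply: ler_prod => j _; apply/andP; split; first by rewrite normrX exprn_ge0.
  rewrite normrX Hz; apply: lerXn2r; rewrite ?nnegrE ?(ltW rho0) //.
  exact: le_trans (Hy j) drho.
Qed.
Lemma ra_cont (R : realType) N (f : 'rV[R]_N -> R) a :
  real_analytic_at f a -> {for a, continuous f}.
Proof.
move=> [r [r0 [c H]]].
set rho := r / 2.
have rho0 : 0 < rho by rewrite /rho divr_gt0.
have rhor : rho < r by rewrite /rho; lra.
set z := a + const_mx rho.
have Hz i : `|z 0 i - a 0 i| = rho by rewrite !mxE addrC addKr gtr0_norm.
have zr : `|z - a| < r.
  apply: le_lt_trans (@mx_norm_le _ 1 N (z - a) rho (ltW rho0) _) rhor => i j.
  by rewrite !mxE ord1 addrC addKr gtr0_norm.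
have [S HS] := bnd (proj1 (H z zr)).
have S0 : 0 <= S by apply: le_trans (HS 0%N).
have fa : f a = c (fun _ => 0%N).
  have [_ Ha] : _ /\ _ := H a (ltac:(by rewrite subrr normr0)).
  have E : mpser_box c a a = fun=> c (fun _ => 0%N).
    apply: boolp.funext => n /=.
    apply/eqP; rewrite -subr_eq0 -normr_le0.
    apply: le_trans (@box_est _ _ c a a z 0 rho n rho0 (lexx 0) (ltW rho0) _ Hz) _.
      by move=> i; rewrite subrr normr0.
    by rewrite !mul0r.
  rewrite E in Ha.
  have Hc := cvg_cst (c (fun _ => 0%N)) (F := \oo).
  rewrite -(cvg_lim _ Ha) //; apply: cvg_lim => //; exact: cvg_cst.
apply/(@cvgrPdist_le _ _ _ (nbhs a)) => e e0.
set d := Num.min rho (e * rho / (S + 1)).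
have S10 : 0 < S + 1 by lra.
have d0 : 0 < d by rewrite lt_min rho0 /= divr_gt0 // mulr_gt0.
have drho : d <= rho by rewrite ge_min lexx.
have dS : d * S <= e * rho.
  have : d <= e * rho / (S + 1) by rewrite ge_min lexx orbT.
  rewrite ler_pdivlMr // => h; apply: le_trans h; rewrite mulrDr mulr1 lerDl; exact: ltW.
have Hb : \forall y \near a, `|a - y| < d by exact: (@cvgr_dist_lt _ _ _ (nbhs a) _ id a (@cvg_id _ (nbhs a))).
apply: filterS Hb => y Hy.
have Hyi i : `|y 0 i - a 0 i| <= d.
  apply: le_trans (ltW Hy); rewrite distrC.
  by have := @mx_entry_le _ _ _ (a - y) 0 i; rewrite !mxE.
have yr : `|y - a| < r by rewrite distrC; apply: lt_le_trans Hy _; exact: le_trans drho (ltW rhor).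
have [_ Hu] := H y yr.
have L : `|c (fun _ => 0%N) - mpser_box c a y n| @[n --> \oo] --> `|c (fun _ => 0%N) - f y|.
  by apply: cvg_norm; apply: cvgB => //; exact: cvg_cst.
rewrite fa -(cvg_lim _ L) //; apply: limr_le; first by apply/cvg_ex; eexists; exact: L.
apply: nearW => n /=.
rewrite distrC; apply: le_trans (@box_est _ _ c a y z d rho n rho0 (ltW d0) drho Hyi Hz) _.
apply: le_trans (_ : d / rho * S <= _).
  by apply: ler_wpM2l; [exact: divr_ge0 (ltW d0) (ltW rho0) | exact: le_trans (ler_norm _) (HS n)].
by rewrite mulrAC ler_pdivrMr.
Qed.

Lemma det_cvg (R : realType) (T : Type) (F : set_system T) {FF : Filter F} n
  (E : 'I_n -> 'I_n -> T -> R) (L : 'M[R]_n) :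
 (forall p q, E p q x @[x --> F] --> L p q) ->
 \det (\matrix_(p, q) E p q x) @[x --> F] --> \det L.
Proof.
move=> HE.
rewrite (@eq_cvg _ _ F _ (fun x => \sum_(s : {perm 'I_n}) (-1) ^+ s * \prod_i E i (s i) x)); last first.
  by move=> x; rewrite /determinant; apply: eq_bigr => s _; congr (_ * _); apply: eq_bigr => i _; rewrite mxE.
have HH := (@cvg_big R _ +%R 0 (fun _ => true) add_continuous T F _ (fun (s : {perm 'I_n}) x => (-1) ^+ s * \prod_i E i (s i) x) (fun (s : {perm 'I_n}) => (-1) ^+ s * \prod_i L i (s i))) .
apply: HH => // s _.
apply: cvgMl_tmp.
apply: (@cvg_big R _ *%R 1 (fun _ => true) mul_continuous T F _ (fun i x => E i (s i) x) (fun i => L i (s i))) => // i _.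
Qed.

Lemma derive_aff (R : realType) n (f : 'rV[R]_n -> R) (a v : 'rV[R]_n) (k : R) :
 (forall h : R, f (h *: v + a) = f a + h * k) -> 'D_v f a = k.
Proof.
move=> Hf; rewrite /derive.
apply: cvg_lim => //.
apply: (@cvg_trans _ (((fun=> k) : R -> R) @ 0^')); last exact: cvg_cst.
apply: near_eq_cvg; near=> h => /=.
apply/esym; rewrite Hf addrAC subrr add0r.
have -> : h^-1 *: (h * k) = h^-1 * (h * k) by [].
rewrite mulrA mulVf ?mul1r //.
by near: h; exact: (@nbhs_dnbhs_neq R 0).
Unshelve. all: by end_near.
Qed.
Lemma affine_rank (R : realType) m n (B : 'M[R]_(n, m)) (c : 'rV[R]_m) k :
  affine_dim [set t : 'rV[R]_n | t *m B = c] k ->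
  \rank B = (n - k)%N /\ exists p, p *m B = c.
Proof.
move=> [p [U [rU HS]]].
have pS : p *m B = c.
  have : [set t : 'rV[R]_n | t *m B = c] p by rewrite HS; exists 0; [exact: sub0mx | rewrite addr0].
  done.
have key (u : 'rV[R]_n) : (u <= U)%MS = (u <= kermx B)%MS.
  rewrite sub_kermx; apply/idP/idP.
  - move=> uU.
    have : [set t : 'rV[R]_n | t *m B = c] (p + u) by rewrite HS; exists u.
    rewrite /= mulmxDl pS => E; apply/eqP.
    by rewrite -[u *m B](addKr c) E addNr.
  - move/eqP=> uB.
    have : [set t : 'rV[R]_n | t *m B = c] (p + u) by rewrite /= mulmxDl pS uB addr0.
    by rewrite HS => -[u' u'U /addrI <-].
have eqK : \rank U = \rank (kermx B).
  apply/eqP; rewrite eqn_leq !mxrankS //; apply/row_subP => i.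
  by rewrite key row_sub.
  by have := key (row i U); rewrite row_sub => <-.
split; last by exists p.
rewrite mxrank_ker rU in eqK.
by rewrite eqK subKn // rank_leq_row.
Qed.
Theorem lemma6p2 (R : realType) (N1 N2 M : nat)
    (W : set 'rV[R]_N1) (s0 : 'rV[R]_N1)
    (V : 'I_M -> 'I_N2 -> ('rV[R]_N1 -> R)) (b : 'I_M -> ('rV[R]_N1 -> R))
    (t0 : 'rV[R]_N2) (kappa : nat) :
  open W -> W s0 ->
  (forall i j, real_analytic_on W (V i j)) ->
  (forall i, real_analytic_on W (b i)) ->
  (forall i, affL V b i (row_mx s0 t0) = 0) ->
  let G := [set affL V b i | i in [set: 'I_M]] in
  let A := [set y : 'rV[R]_(N1 + N2) |
              W (lsubmx y) /\ forall f, G f -> f y = 0] in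
  (forall s1, W s1 -> affine_dim [set t | A (row_mx s1 t)] kappa) ->
  ordinary_zero G (row_mx s0 t0).
Proof.
move=> oW Ws0 HV _ H0 G A Hdim.
pose Bm (s : 'rV[R]_N1) : 'M[R]_(N2, M) := \matrix_(j, i) V i j s.
pose cm (s : 'rV[R]_N1) : 'rV[R]_M := \row_i b i s.
have affE s t i : affL V b i (row_mx s t) = (t *m Bm s) 0 i - cm s 0 i.
  rewrite /affL row_mxKl row_mxKr !mxE; congr (_ - _).
  by apply: eq_bigr => j _; rewrite !mxE mulrC.
have GE s t : (forall g, G g -> g (row_mx s t) = 0) <-> t *m Bm s = cm s.
  split => [H|E g [i _ <-]]; last by rewrite affE E subrr.
  apply/rowP => i; rewrite [LHS]mxE.
  move: (H (affL V b i) (ltac:(by exists i))); rewrite affE => /eqP.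
  by rewrite subr_eq0 => /eqP; rewrite !mxE.
have Hrk s1 : W s1 -> \rank (Bm s1) = (N2 - kappa)%N /\ exists p, p *m Bm s1 = cm s1.
  move=> Ws1; apply: affine_rank; have := Hdim s1 Ws1; congr affine_dim.
  apply/seteqP; split => t /=.
  - by rewrite /A /= row_mxKl => -[_ /GE].
  - by move=> E; split; [rewrite row_mxKl | exact/GE].
set T0 := (Bm s0)^T.
set k := \rank T0.
set F := maxrankfun T0.
have colsubE s : colsub F (Bm s) = (rowsub F (Bm s)^T)^T.
  by apply/matrixP => i j; rewrite !mxE.
have rkP0 : \rank (rowsub F T0) = k by apply/eqP; exact: maxrowsub_free.
exists k, (fun p => affL V b (F p)); split; first by move=> p; exists (F p).
split.
  set Jm := Defs.jacobian _ _.

  have shiftE h j : h *: delta_mx 0 (rshift N1 j) + row_mx s0 t0 = row_mx s0 (t0 + h *: delta_mx 0 j).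
    have -> : delta_mx 0 (rshift N1 j) = row_mx 0 (delta_mx 0 j) :> 'rV[R]_(N1 + N2).
      apply/matrixP => a q; case: (split_ordP q) => q' ->.
        by rewrite row_mxEl !mxE eq_lrshift andbF.
      by rewrite row_mxEr !mxE eq_rshift.
    by rewrite scale_row_mx add_row_mx scaler0 add0r addrC.
  have rJ : rsubmx Jm = rowsub F T0.
    apply/matrixP => p j; rewrite !mxE; apply: derive_aff => h.
    rewrite shiftE !affE mulmxDl -scalemxAl -rowE.
    by rewrite !mxE addrAC.
  apply/eqP; rewrite eqn_leq rank_leq_row /=.
  apply: leq_trans (mxrankM_maxl Jm (rsubmx (1%:M : 'M[R]_(N1 + N2))));
  by rewrite mulmx_rsub mulmx1 rJ rkP0.
pose P (s : 'rV[R]_N1) := colsub F (Bm s).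
have [X HX] : exists X : 'M[R]_(N2, k), (P s0)^T *m X = 1%:M.
  by apply/row_freeP; rewrite /P colsubE trmxK; exact: maxrowsub_free.
pose Q := X^T.
pose D (y : 'rV[R]_(N1 + N2)) := \det (\matrix_(p, q) \sum_j Q p j * V (F q) j (lsubmx y)).
have DM s : \matrix_(p, q) \sum_j Q p j * V (F q) j s = Q *m P s.
  by apply/matrixP => p q; rewrite !mxE; apply: eq_bigr => j _; rewrite !mxE.
have Hl : lsubmx y @[y --> row_mx s0 t0] --> s0.
  rewrite -[X in _ --> X](row_mxKl s0 t0); exact: continuous_lsubmx.
have cD : D y @[y --> row_mx s0 t0] --> \det (Q *m P s0).
  rewrite -DM; apply: (@det_cvg R _ (nbhs (row_mx s0 t0)) _) => p q.
  rewrite mxE.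
  apply: (@cvg_big R _ +%R 0 (fun _ => true) add_continuous _ (nbhs (row_mx s0 t0)) _ (fun j y => Q p j * V (F q) j (lsubmx y)) (fun j => Q p j * V (F q) j s0)) => // j _.
  apply: cvgMl_tmp.
  apply: (cvg_comp _ _ Hl); exact: ra_cont (HV _ _ _ Ws0).
have QP : Q *m P s0 = 1%:M by rewrite /Q -[P s0]trmxK -trmx_mul HX trmx1.
have DN : \forall y \near row_mx s0 t0, D y != 0.
  by apply: cvgr_neq0 cD _; rewrite QP det1 oner_neq0.
have WN : \forall y \near row_mx s0 t0, W (lsubmx y).
  by apply: Hl; apply: open_nbhs_nbhs; split.
apply: filterS2 WN DN => y Wy Dy.
rewrite -(hsubmxK y) in Wy Dy *.
move: (lsubmx y) (rsubmx y) Wy Dy => s t; rewrite /D row_mxKl => Ws Ds.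
rewrite DM in Ds.
have rkPs : \rank (P s) = k.
  apply/eqP; rewrite eqn_leq rank_leq_col /=.
  have <- : \rank (Q *m P s) = k by apply: mxrank_unit; rewrite unitmxE unitfE.
  exact: mxrankM_maxr.
have [rks [pp Hpp]] := Hrk s Ws.
have [rks0 _] := Hrk s0 Ws0.
have TP : ((Bm s)^T <= (P s)^T)%MS.
  have sub : ((P s)^T <= (Bm s)^T)%MS by rewrite /P colsubE trmxK rowsub_sub.
  by rewrite -(mxrank_leqif_sup sub).2 !mxrank_tr (mxrank_tr (Bm s)) rkPs rks /k /T0 mxrank_tr rks0.
set Dm := ((Bm s)^T *m pinvmx (P s)^T)^T.
have BD : Bm s = P s *m Dm by apply: trmx_inj; rewrite trmx_mul trmxK mulmxKpV.
have colE (u : 'rV[R]_N2) : u *m P s = colsub F (u *m Bm s) by rewrite mulmx_colsub.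
rewrite GE; split.
  by move=> E p; rewrite affE E subrr.
move=> Hp.
have tP : t *m P s = colsub F (cm s).
  rewrite colE; apply/rowP => p; rewrite [LHS]mxE [RHS]mxE.
  by have := Hp p; rewrite affE => /eqP; rewrite subr_eq0 => /eqP.
have pP : pp *m P s = colsub F (cm s) by rewrite colE Hpp.
by rewrite BD mulmxA tP -pP -mulmxA -BD.
Qed.
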